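(* Let $\Sigma$ be a finite alphabet, $\# \notin \Sigma$ a padding symbol, and $\Sigma_\# = \Sigma \cup \{\#\}$. Let $\mathcal{A} = (\Sigma_\# \times \Sigma_\#, Q, \delta, q_0, F)$ be a deterministic transducer satisfying the following two conditions: (C4) from every state of $\mathcal{A}$ some accepting state (an element of $F$) is reachable; (C11) the relation $R \subseteq \Sigma^* \times \Sigma^*$ recognised by $\mathcal{A}$ only relates words with the same Parikh vector, i.e. $(v,w) \in R$ implies $\mathbb{P}(v) = \mathbb{P}(w)$. Let $\rho_1$ and $\rho_2$ be paths in $\mathcal{A}$ that both start in the initial state $q_0$ and both end in the same (not necessarily accepting) state $q \in Q$, and let $v_1 \otimes w_1$ and $v_2 \otimes w_2$ be the words (over $\Sigma_\# \times \Sigma_\#$) read along $\rho_1$ and $\rho_2$, respectively, where $v_i$ is the first track and $w_i$ the second track. Then $$\mathbb{P}(w_1) - \mathbb{P}(v_1) = \mathbb{P}(w_2) - \mathbb{P}(v_2).$$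
   Context: A transducer (letter-to-letter automaton) over $\Sigma$ is a finite automaton $(\Sigma_\# \times \Sigma_\#, Q, \delta, q_0, F)$ whose input letters are pairs $(a,b)$ with $a,b \in \Sigma_\#$; a word over $\Sigma_\#\times\Sigma_\#$ of the form $(a_1,b_1)\cdots(a_k,b_k)$ is written $v \otimes w$ with $v = a_1\cdots a_k$, $w = b_1 \cdots b_k$. For $v,w \in \Sigma^*$, $v \otimes w$ is obtained by padding the shorter word with $\#$ to equal length; the transducer recognises the relation $R = \{(v,w) \in \Sigma^*\times\Sigma^* : v\otimes w \text{ is accepted by } \mathcal{A}\}$. Deterministic means that for each state and each letter of $\Sigma_\#\times\Sigma_\#$ there is at most one transition. For $\Sigma = \{s_1,\dots,s_n\}$, the Parikh vector $\mathbb{P}(u)$ of a word $u$ is the integer vector $(|u|_{s_1},\dots,|u|_{s_n})$ of the numbers of occurrences of $s_1,\dots,s_n$ in $u$ (occurrences of the padding symbol $\#$ are not counted); differences of Parikh vectors are taken componentwise in $\mathbb{Z}^n$.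
   Formalization: $\mathcal{A}$ also accepts no word over $\Sigma_\# \times \Sigma_\#$ other than those of the form $v \otimes w$ with $v,w \in \Sigma^*$. The paper assumes this as well. *)

(* Defs.v *)
From mathcomp Require Import all_boot all_order all_algebra.
Set Implicit Arguments. Unset Strict Implicit. Unset Printing Implicit Defensive.
Import GRing.Theory.
Local Open Scope ring_scope.

(* Padded alphabet Sigma_# = option Sigma, with None playing the role of #. *)
Definition padletter (Sigma : finType) := option Sigma.
Definition pletter (Sigma : finType) := (option Sigma * option Sigma)%type.

(* A deterministic letter-to-letter transducer: the transition function is
   partial (at most one transition per state and letter). *)
Record transducer (Sigma : finType) := Transducer {
  state : finType;
  delta : state -> pletter Sigma -> option state;
  init : state;
  final : {set state}
}.

Fixpoint run (Sigma : finType) (A : transducer Sigma) (q : state A)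
    (u : seq (pletter Sigma)) : option (state A) :=
  match u with
  | [::] => Some q
  | x :: u' => match delta q x with
               | Some q' => run q' u'
               | None => None
               end
  end.

Definition accepts (Sigma : finType) (A : transducer Sigma)
    (u : seq (pletter Sigma)) : bool :=
  if run (init A) u is Some q then q \in final A else false.

(* Convolution v (x) w : pad the shorter word with # to equal length. *)
Definition pad (Sigma : finType) (n : nat) (v : seq Sigma) : seq (option Sigma) :=
  map Some v ++ nseq (n - size v) None.

Definition conv (Sigma : finType) (v w : seq Sigma) : seq (pletter Sigma) :=
  zip (pad (maxn (size v) (size w)) v) (pad (maxn (size v) (size w)) w).

Definition recognised (Sigma : finType) (A : transducer Sigma) (v w : seq Sigma) : bool :=
  accepts A (conv v w).

Definition parikh (Sigma : finType) (s : seq (option Sigma)) : {ffun Sigma -> int} :=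
  [ffun a => (count_mem (Some a) s)%:Z].

Definition parikhS (Sigma : finType) (v : seq Sigma) : {ffun Sigma -> int} :=
  parikh (map Some v).

Definition track1 (Sigma : finType) (u : seq (pletter Sigma)) : seq (option Sigma) := unzip1 u.
Definition track2 (Sigma : finType) (u : seq (pletter Sigma)) : seq (option Sigma) := unzip2 u.

Definition pdiff (Sigma : finType) (x y : {ffun Sigma -> int}) : {ffun Sigma -> int} :=
  [ffun a => x a - y a].

Definition cond_C4 (Sigma : finType) (A : transducer Sigma) : Prop :=
  forall q : state A, exists (u : seq (pletter Sigma)) (q' : state A),
    run q u = Some q' /\ q' \in final A.

Definition cond_C11 (Sigma : finType) (A : transducer Sigma) : Prop :=
  forall v w : seq Sigma, recognised A v w -> parikhS v = parikhS w.

(* Standing convention "A recognises a relation": every accepted word is a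
   convolution v (x) w of words over Sigma. *)
Definition accepts_only_convolutions (Sigma : finType) (A : transducer Sigma) : Prop :=
  forall u : seq (pletter Sigma), accepts A u -> exists v w : seq Sigma, u = conv v w.

(* Main.v *)
Require Import Defs.
From mathcomp Require Import all_boot all_order all_algebra.
From mathcomp Require Import zify.
Import GRing.Theory.

Lemma run_cat (Sigma : finType) (A : transducer Sigma) (q : state A) u u' :
  run q (u ++ u') = match run q u with Some q' => run q' u' | None => None end.
Proof.
elim: u q => [|x u IH] q //=.
case: (delta q x) => [q'|] //.
Qed.

Lemma size_pad (Sigma : finType) n (v : seq Sigma) : size v <= n -> size (pad n v) = n.
Proof. by move=> h; rewrite /pad size_cat size_map size_nseq subnKC. Qed.

Lemma count_pad (Sigma : finType) n (v : seq Sigma) a :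
  count_mem (Some a) (pad n v) = count_mem (Some a) (map Some v).
Proof.
rewrite /pad count_cat; rewrite (_ : count_mem (Some a) (nseq _ None) = 0) ?addn0 //.
by elim: (n - size v) => //= k ->.
Qed.

Lemma balanced (Sigma : finType) (A : transducer Sigma)
  (HR : accepts_only_convolutions A) (HC11 : cond_C11 A) u a :
  accepts A u -> count_mem (Some a) (unzip2 u) = count_mem (Some a) (unzip1 u).
Proof.
move=> acc; have [v [w E]] := HR u acc.
have hv := HC11 v w; rewrite /recognised -E in hv; move: (hv acc) => /ffunP /(_ a).
rewrite /parikhS !ffunE => [[]] H.
rewrite E /conv unzip1_zip ?unzip2_zip ?size_pad ?leq_maxl ?leq_maxr //.
by rewrite !count_pad H.
Qed.

Theorem mainTheorem1 (Sigma : finType) (A : transducer Sigma)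
  (HR : accepts_only_convolutions A) (HC4 : cond_C4 A) (HC11 : cond_C11 A)
  (q : state A) (u1 u2 : seq (pletter Sigma)) :
  run (init A) u1 = Some q -> run (init A) u2 = Some q ->
  pdiff (parikh (track2 u1)) (parikh (track1 u1)) =
  pdiff (parikh (track2 u2)) (parikh (track1 u2)).
Proof.
move=> r1 r2; have [u [q' [ru fq]]] := HC4 q.
have a1 : accepts A (u1 ++ u) by rewrite /accepts run_cat r1 ru.
have a2 : accepts A (u2 ++ u) by rewrite /accepts run_cat r2 ru.
apply/ffunP => a; rewrite !ffunE /track1 /track2.
move: (@balanced _ _ HR HC11 _ a a1) (@balanced _ _ HR HC11 _ a a2).
rewrite /unzip1 /unzip2 !map_cat !count_cat.
set x1 := count _ (map _ u1); set y1 := count _ (map _ u1).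
set x2 := count _ (map _ u2); set y2 := count _ (map _ u2).
set xu := count _ (map _ u); set yu := count _ (map _ u).
move=> h1 h2; clearbody x1 y1 x2 y2 xu yu; clear -h1 h2; lia.
Qed.
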